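(* Let $\xi\in\mathbb{R}\setminus\mathbb{Q}$, let $n\ge1$ be an integer, and let $q$ be the denominator of a convergent of the continued fraction expansion of $\xi$. Then the last (i.e. $(n+1)$-st) successive minimum of the convex body $\mathcal{C}(q)$ with respect to the lattice $\mathbb{Z}[T]_{\le n}$ is $\le 2^n$, and its first successive minimum is $\ge \left(2^{n^2}(n+1)!\right)^{-1}$. Moreover, the convex body $2^n\mathcal{C}(q)$ contains a basis of $\mathbb{Z}[T]_{\le n}$ over $\mathbb{Z}$.
   Context: $\mathbb{R}[T]_{\le n}$ denotes the real vector space of polynomials in $\mathbb{R}[T]$ of degree $\le n$, and $\mathbb{Z}[T]_{\le n}$ its subgroup of polynomials with integer coefficients (a lattice of rank $n+1$, identified with $\mathbb{Z}^{n+1}$ via coefficients). For $P \in \mathbb{R}[T]$ and $k\ge0$, $P^{[k]}(\xi) = P^{(k)}(\xi)/k!$ is the $k$-th divided derivative (the coefficient of $(T-\xi)^k$ in the Taylor expansion of $P$ at $\xi$). For an integer $q\ge1$, $\mathcal{C}(q)$ is the convex body of all $P \in \mathbb{R}[T]_{\le n}$ with $|P^{[k]}(\xi)| \le q^{2k-n}$ for $0\le k\le n$. The successive minima $\lambda_1\le\dots\le\lambda_{n+1}$ of a convex body $\mathcal{C}$ with respect to a lattice $\Lambda$ are defined by: $\lambda_i$ is the smallest $\lambda>0$ such that $\lambda\mathcal{C}$ contains $i$ linearly independent elements of $\Lambda$. *)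

(* Defs.v *)
From Stdlib Require Import Reals ZArith Arith Lia.
Open Scope R_scope.

Fixpoint sumR (i : nat) (f : nat -> R) : R :=
  match i with O => 0 | S i' => sumR i' f + f i' end.
Fixpoint sumZ (i : nat) (f : nat -> Z) : Z :=
  match i with O => 0%Z | S i' => (sumZ i' f + f i')%Z end.

(* complete quotients: x_0 = x, x_{k+1} = 1/(x_k - floor x_k) ;
   Int_part is the floor function *)
Fixpoint cf_complete (x : R) (k : nat) : R :=
  match k with
  | O => x
  | S k' => / (cf_complete x k' - IZR (Int_part (cf_complete x k')))
  end.
Definition cf_partial (x : R) (k : nat) : Z := Int_part (cf_complete x k).
(* (q_k, q_{k-1}) with q_{-1} = 0, q_0 = 1, q_{k+1} = a_{k+1} q_k + q_{k-1} *)
Fixpoint cf_denoms (x : R) (k : nat) : Z * Z :=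
  match k with
  | O => (1%Z, 0%Z)
  | S k' => let (a, b) := cf_denoms x k' in
            ((cf_partial x (S k') * a + b)%Z, a)
  end.
Definition convergent_denominator (x : R) (k : nat) : Z := fst (cf_denoms x k).
Definition is_convergent_denominator (x : R) (q : Z) : Prop :=
  exists k, convergent_denominator x k = q.

Definition irrational (x : R) : Prop :=
  ~ exists p r : Z, r <> 0%Z /\ x = IZR p / IZR r.

(* ---- polynomials of degree <= n with integer coefficients ----
   represented by their coefficient functions a : nat -> Z, where only the
   coefficients a 0, ..., a n are relevant: P = sum_{j<=n} a_j T^j. *)

Definition divderiv (xi : R) (n : nat) (a : nat -> Z) (k : nat) : R :=
  sumR (S n) (fun j => if Nat.leb k j
                       then C j k * IZR (a j) * xi ^ (j - k) else 0).

(* P belongs to lam * C(q), i.e. |P^[k](xi)| <= lam q^(2k-n) for 0<=k<=n *)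
Definition in_scaled_body (xi : R) (n : nat) (q : Z) (lam : R) (a : nat -> Z) : Prop :=
  forall k, (k <= n)%nat ->
    Rabs (divderiv xi n a k) <= lam * powerRZ (IZR q) (2 * Z.of_nat k - Z.of_nat n).

Definition lin_indep (n i : nat) (fam : nat -> nat -> Z) : Prop :=
  forall c : nat -> R,
    (forall j, (j <= n)%nat -> sumR i (fun m => c m * IZR (fam m j)) = 0) ->
    forall m, (m < i)%nat -> c m = 0.

Definition Z_basis (n : nat) (fam : nat -> nat -> Z) : Prop :=
  lin_indep n (S n) fam /\
  forall a : nat -> Z, exists c : nat -> Z,
    forall j, (j <= n)%nat -> a j = sumZ (S n) (fun m => (c m * fam m j)%Z).

Definition minima_set (xi : R) (n : nat) (q : Z) (i : nat) (lam : R) : Prop :=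
  0 < lam /\ exists fam : nat -> nat -> Z,
    lin_indep n i fam /\ forall m, (m < i)%nat -> in_scaled_body xi n q lam (fam m).

Definition is_inf (E : R -> Prop) (l : R) : Prop :=
  (forall x, E x -> l <= x) /\ (forall b, (forall x, E x -> b <= x) -> b <= l).

Definition successive_minimum (xi : R) (n : nat) (q : Z) (i : nat) (lam : R) : Prop :=
  is_inf (minima_set xi n q i) lam.

(* Main.v *)
Require Import Defs.
From Stdlib Require Import Reals ZArith Arith Lia Lra Psatz List Classical.
Open Scope R_scope.

Lemma sumR_ext N f g : (forall i, (i < N)%nat -> f i = g i) -> sumR N f = sumR N g.
Proof. induction N; simpl; intros H; auto. rewrite IHN, H; auto. Qed.

Lemma sumR_plus N f g : sumR N (fun i => f i + g i) = sumR N f + sumR N g.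
Proof. induction N; simpl; [lra|rewrite IHN; lra]. Qed.

Lemma sumR_minus N f g : sumR N (fun i => f i - g i) = sumR N f - sumR N g.
Proof. induction N; simpl; [lra|rewrite IHN; lra]. Qed.

Lemma sumR_scal N c f : sumR N (fun i => c * f i) = c * sumR N f.
Proof. induction N; simpl; [lra|rewrite IHN; lra]. Qed.

Lemma sumR_swap N M (f : nat -> nat -> R) :
  sumR N (fun i => sumR M (fun j => f i j)) = sumR M (fun j => sumR N (fun i => f i j)).
Proof.
  induction N; simpl.
  - induction M; simpl; [lra| rewrite <- IHM; lra].
  - rewrite IHN, <- sumR_plus. reflexivity.
Qed.

Lemma sumR_S N f : sumR (S N) f = sumR N f + f N.
Proof. reflexivity. Qed.

Lemma sumR_shift N f : sumR (S N) f = f 0%nat + sumR N (fun i => f (S i)).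
Proof. induction N; simpl in *; [lra|rewrite IHN; lra]. Qed.

Lemma sumR_zero N f : (forall i, (i < N)%nat -> f i = 0) -> sumR N f = 0.
Proof. induction N; simpl; intros H; auto. rewrite IHN, H; auto; lra. Qed.

Lemma sumR_abs N f : Rabs (sumR N f) <= sumR N (fun i => Rabs (f i)).
Proof.
  induction N; simpl. rewrite Rabs_R0; lra.
  eapply Rle_trans. apply Rabs_triang. lra.
Qed.

Lemma sumR_le N f g : (forall i, (i < N)%nat -> f i <= g i) -> sumR N f <= sumR N g.
Proof. induction N; simpl; intros H; [lra|]. assert (f N <= g N) by auto.
  assert (sumR N f <= sumR N g) by auto. lra. Qed.

Lemma sumR_const N c : sumR N (fun _ => c) = INR N * c.
Proof. induction N; simpl sumR. simpl; lra. rewrite IHN, S_INR; lra. Qed.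

Lemma sumR_trunc M N f : (M <= N)%nat -> (forall i, (M <= i)%nat -> (i < N)%nat -> f i = 0) ->
  sumR N f = sumR M f.
Proof.
  induction N; intros HMN H.
  - assert (M = 0%nat) by lia; subst; reflexivity.
  - destruct (Nat.eq_dec M (S N)). subst; reflexivity.
    simpl. rewrite IHN by (auto; lia). rewrite H by lia. lra.
Qed.

Lemma sum_f_R0_sumR f n : sum_f_R0 f n = sumR (S n) f.
Proof. induction n; simpl in *; [lra|rewrite IHn; reflexivity]. Qed.

Lemma IZR_sumZ N f : IZR (sumZ N f) = sumR N (fun i => IZR (f i)).
Proof. induction N; simpl; auto. rewrite plus_IZR, IHN; reflexivity. Qed.

Fixpoint bin (d i : nat) : R :=
  match d, i with
  | O, O => 1 | O, S _ => 0
  | S d', O => 1 | S d', S i' => bin d' i' + bin d' (S i') end.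

Lemma bin_pos d i : 0 <= bin d i.
Proof. revert i; induction d; destruct i; simpl; try lra.
  pose proof (IHd i); pose proof (IHd (S i)); lra. Qed.

Lemma bin_le d i : bin d i <= 2 ^ d.
Proof. revert i; induction d; destruct i; simpl; try lra.
  - pose proof (pow_R1_Rle 2 d ltac:(lra)). lra.
  - pose proof (IHd i); pose proof (IHd (S i)); lra. Qed.

Lemma bin_0 d : bin d 0 = 1.
Proof. destruct d; reflexivity. Qed.

Lemma bin_big d i : (d < i)%nat -> bin d i = 0.
Proof. revert i; induction d; destruct i; simpl; intros; try lra; try lia.
  rewrite !IHd by lia; lra. Qed.

Definition hev (d : nat) (c : nat -> R) (u v : R) : R :=
  sumR (S d) (fun i => c i * u ^ i * v ^ (d - i)).

Definition mulLin (al be : R) (c : nat -> R) (i : nat) : R :=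
  al * c i + be * (match i with O => 0 | S i' => c i' end).

Lemma hev_mulLin d al be c u v : c (S d) = 0 ->
  hev (S d) (mulLin al be c) u v = (al * v + be * u) * hev d c u v.
Proof.
  intros H. unfold hev, mulLin.
  rewrite (sumR_ext _ _ (fun i => al * c i * u ^ i * v ^ (S d - i) +
     be * match i with O => 0 | S i' => c i' end * u ^ i * v ^ (S d - i)))
    by (intros; ring).
  rewrite sumR_plus.
  replace (sumR (S (S d)) (fun i => al * c i * u ^ i * v ^ (S d - i)))
    with (al * v * sumR (S d) (fun i => c i * u ^ i * v ^ (d - i))).
  2:{ rewrite (sumR_S (S d)). rewrite H. rewrite <- sumR_scal.
      rewrite ?Rmult_0_r, ?Rmult_0_l, ?Rplus_0_r.
      apply sumR_ext. intros i Hi. replace (S d - i)%nat with (S (d - i)) by lia.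
      simpl. ring. }
  replace (sumR (S (S d)) (fun i => be * match i with O => 0 | S i' => c i' end * u ^ i * v ^ (S d - i)))
   with (be * u * sumR (S d) (fun i => c i * u ^ i * v ^ (d - i))).
  2:{ symmetry. rewrite sumR_shift. rewrite <- sumR_scal. simpl (match 0%nat with O => 0 | S i' => c i' end).
      rewrite Rmult_0_r, !Rmult_0_l, Rplus_0_l. apply sumR_ext. intros i Hi. simpl. ring. }
  ring.
Qed.

Definition delta0 (i : nat) : R := if Nat.eqb i 0 then 1 else 0.

Definition lin_from (fs : list (R * R)) (c0 : nat -> R) : nat -> R :=
  fold_right (fun f c => mulLin (fst f) (snd f) c) c0 fs.

Definition prodf (fs : list (R * R)) (u v : R) : R :=
  fold_right (fun f acc => (fst f * v + snd f * u) * acc) 1 fs.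

Lemma lin_from_supp fs c0 d : (forall i, (d < i)%nat -> c0 i = 0) ->
  forall i, (length fs + d < i)%nat -> lin_from fs c0 i = 0.
Proof.
  intros H0. induction fs as [|f fs IH]; simpl; intros i Hi.
  - apply H0; lia.
  - unfold mulLin. rewrite IH by lia. destruct i. lia. rewrite IH by lia. ring.
Qed.

Lemma hev_lin_from fs c0 d u v : (forall i, (d < i)%nat -> c0 i = 0) ->
  hev (length fs + d) (lin_from fs c0) u v = prodf fs u v * hev d c0 u v.
Proof.
  intros H0. induction fs as [|f fs IH]; simpl.
  - ring.
  - rewrite hev_mulLin. rewrite IH. ring.
    apply (lin_from_supp fs c0 d H0). lia.
Qed.

Lemma lin_from_bound fs c0 d rho w M :
  0 <= rho -> 0 <= w ->
  Forall (fun f => Rabs (fst f) <= rho /\ Rabs (snd f) <= rho * w) fs ->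
  (forall i, Rabs (c0 i) <= M * bin d i * w ^ i) ->
  forall i, Rabs (lin_from fs c0 i) <= M * rho ^ (length fs) * bin (length fs + d) i * w ^ i.
Proof.
  intros Hr Hw HF H0. induction HF as [|f fs [Ha Hb] HF IH]; simpl; intros i.
  - rewrite H0. lra.
  - unfold mulLin. set (D := (length fs + d)%nat) in *.
    destruct i as [|i].
    + rewrite Rmult_0_r, Rplus_0_r, Rabs_mult. specialize (IH 0%nat).
      rewrite !bin_0 in *. simpl pow in *.
      eapply Rle_trans. apply Rmult_le_compat; try apply Rabs_pos; eauto. right; ring.
    + eapply Rle_trans. apply Rabs_triang. rewrite !Rabs_mult.
      pose proof (IH (S i)) as I1. pose proof (IH i) as I2.
      assert (A1 : Rabs (fst f) * Rabs (lin_from fs c0 (S i)) <=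
                 rho * (M * rho ^ length fs * bin D (S i) * w ^ S i)).
      { apply Rmult_le_compat; try apply Rabs_pos; auto. }
      assert (A2 : Rabs (snd f) * Rabs (lin_from fs c0 i) <=
                 rho * w * (M * rho ^ length fs * bin D i * w ^ i)).
      { apply Rmult_le_compat; try apply Rabs_pos; auto. }
      replace (M * (rho * rho ^ length fs) * (bin D i + bin D (S i)) * w ^ S i) with
         (rho * (M * rho ^ length fs * bin D (S i) * w ^ S i) +
          rho * w * (M * rho ^ length fs * bin D i * w ^ i)).
      lra. simpl. ring.
Qed.

Definition pe (N : nat) (e : nat -> R) (u : R) : R := sumR N (fun i => e i * u ^ i).

Lemma hev_pe d c u : hev d c u 1 = pe (S d) c u.
Proof. unfold hev, pe. apply sumR_ext; intros. rewrite pow1; ring. Qed.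

Lemma pe_shift N e u : pe (S N) e u = e 0%nat + u * pe N (fun i => e (S i)) u.
Proof. unfold pe. rewrite sumR_shift, <- sumR_scal. simpl. f_equal. ring.
  apply sumR_ext; intros; simpl; ring. Qed.

Lemma pe_small N e u : Rabs u <= 1 -> Rabs (pe N e u) <= sumR N (fun i => Rabs (e i)).
Proof.
  intros Hu. unfold pe. eapply Rle_trans. apply sumR_abs. apply sumR_le.
  intros i _. rewrite Rabs_mult, <- RPow_abs.
  pose proof (pow_le (Rabs u) i (Rabs_pos u)).

  assert (Rabs u ^ i <= 1). { rewrite <- (pow1 i). apply pow_incr. split; auto. apply Rabs_pos. }
  pose proof (Rabs_pos (e i)). nra.
Qed.

Lemma cont0 N e : (forall u, u <> 0 -> pe (S N) e u = 0) -> e 0%nat = 0.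
Proof.
  intros H. apply NNPP; intros He.
  set (S0 := sumR N (fun i => Rabs (e (S i)))).
  assert (HS : 0 <= S0). { unfold S0. replace 0 with (INR N * 0) by ring.
     rewrite <- (sumR_const N 0). apply sumR_le. intros; apply Rabs_pos. }
  pose proof (Rabs_pos_lt _ He) as Ha.
  set (u := Rmin 1 (Rabs (e 0%nat) / (2 * (S0 + 1)))).
  assert (Hu0 : 0 < u). { unfold u. apply Rmin_glb_lt. lra. apply Rdiv_lt_0_compat; lra. }
  assert (Hu1 : u <= 1) by apply Rmin_l.
  assert (Hu2 : u <= Rabs (e 0%nat) / (2 * (S0 + 1))) by apply Rmin_r.
  specialize (H u ltac:(lra)). rewrite pe_shift in H.
  pose proof (pe_small N (fun i => e (S i)) u ltac:(rewrite Rabs_pos_eq; lra)) as Hs.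
  fold S0 in Hs.
  assert (E : e 0%nat = - (u * pe N (fun i => e (S i)) u)) by lra.
  assert (Rabs (e 0%nat) <= u * S0).
  { rewrite E, Rabs_Ropp, Rabs_mult, (Rabs_pos_eq u) by lra.
    apply Rmult_le_compat_l; [lra|]. unfold S0; exact Hs. }
  assert (u * S0 <= Rabs (e 0%nat) / (2 * (S0 + 1)) * S0) by (apply Rmult_le_compat_r; lra).
  assert (Rabs (e 0%nat) / (2 * (S0 + 1)) * S0 < Rabs (e 0%nat)).
  { unfold Rdiv. apply (Rmult_lt_reg_r (2 * (S0+1))). lra.
    field_simplify; try lra. nra. }
  lra.
Qed.

Lemma UC_pe N : forall e, (forall u, u <> 0 -> pe N e u = 0) -> forall i, (i < N)%nat -> e i = 0.
Proof.
  induction N; intros e H i Hi. lia.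
  assert (E0 : e 0%nat = 0) by (eapply cont0; eauto).
  destruct i. exact E0.
  apply (IHN (fun i => e (S i))); [|lia].
  intros u Hu. specialize (H u Hu). rewrite pe_shift, E0 in H.
  rewrite Rplus_0_l in H. apply Rmult_integral in H. lra.
Qed.

Lemma UC d c c' : (forall u, hev d c u 1 = hev d c' u 1) -> forall i, (i <= d)%nat -> c i = c' i.
Proof.
  intros H i Hi.
  assert (forall u, u <> 0 -> pe (S d) (fun i => c i - c' i) u = 0).
  { intros u _. specialize (H u). rewrite !hev_pe in H. unfold pe in *.
    rewrite (sumR_ext _ _ (fun i => c i * u ^ i - c' i * u ^ i)) by (intros; ring).
    rewrite sumR_minus. lra. }
  pose proof (UC_pe _ _ H0 i ltac:(lia)). lra.
Qed.

Definition TT (xi : R) (n : nat) (a : nat -> R) (k : nat) : R :=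
  sumR (S n) (fun j => if Nat.leb k j then C j k * a j * xi ^ (j - k) else 0).

Lemma sumR_scal_r N c f : sumR N (fun i => f i * c) = sumR N f * c.
Proof. induction N; simpl; [lra|rewrite IHN; lra]. Qed.

Lemma binom_ext j n (X Y y : R) : (j <= n)%nat ->
  (X + Y * y) ^ j * y ^ (n - j) =
  sumR (S n) (fun k => (if Nat.leb k j then C j k * Y ^ (j - k) else 0) * X ^ k * y ^ (n - k)).
Proof.
  intros Hj. rewrite binomial, sum_f_R0_sumR, <- sumR_scal_r.
  rewrite (sumR_trunc (S j) (S n)); [|lia|].
  2:{ intros i H1 H2. replace (Nat.leb i j) with false. ring.
      symmetry; apply Nat.leb_gt; lia. }
  apply sumR_ext. intros k Hk. replace (Nat.leb k j) with true by (symmetry; apply Nat.leb_le; lia).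
  rewrite Rpow_mult_distr.
  replace (n - k)%nat with ((j - k) + (n - j))%nat by lia. rewrite pow_add. ring.
Qed.

Lemma HT xi n a x y :
  hev n a x y = sumR (S n) (fun k => TT xi n a k * (x - xi * y) ^ k * y ^ (n - k)).
Proof.
  unfold hev, TT.
  rewrite (sumR_ext _ _ (fun j => a j * ((x - xi * y + xi * y) ^ j * y ^ (n - j)))).
  2:{ intros; replace (x - xi * y + xi * y) with x by ring. ring. }
  rewrite (sumR_ext _ _ (fun j => sumR (S n) (fun k =>
     (if Nat.leb k j then C j k * a j * xi ^ (j - k) else 0) * (x - xi * y) ^ k * y ^ (n - k)))).
  2:{ intros j Hj. rewrite binom_ext by lia. rewrite <- sumR_scal. apply sumR_ext.
      intros k _. destruct (Nat.leb k j); ring. }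
  rewrite sumR_swap. apply sumR_ext. intros k _.
  rewrite <- !sumR_scal_r. apply sumR_ext. intros; ring.
Qed.

Lemma irr_frac y : irrational y -> 0 < y - IZR (Int_part y) < 1 /\
   irrational (/ (y - IZR (Int_part y))).
Proof.
  intros Hy. destruct (base_Int_part y) as [H1 H2].
  assert (Hne : y - IZR (Int_part y) <> 0).
  { intros E. apply Hy. exists (Int_part y), 1%Z. split. lia. rewrite Rdiv_1_r. lra. }
  split. lra.
  intros [p [r [Hr E]]]. apply Hy.
  destruct (Z.eq_dec p 0) as [->|Hp].
  { rewrite Rdiv_0_l in E. exfalso. apply (Rinv_neq_0_compat _ Hne). exact E. }
  exists (Int_part y * p + r)%Z, p. split; auto.
  assert (IZR r <> 0) by (apply not_0_IZR; auto).
  assert (IZR p <> 0) by (apply not_0_IZR; auto).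
  assert (E2 : y - IZR (Int_part y) = IZR r / IZR p).
  { rewrite <- (Rinv_inv (y - IZR (Int_part y))). rewrite E. field. auto. }
  rewrite plus_IZR, mult_IZR. set (a := Int_part y) in *.
  replace y with (IZR a + IZR r / IZR p) by lra.
  field; auto.
Qed.

Lemma cf_irr x k : irrational x -> irrational (cf_complete x k).
Proof. intros H; induction k; simpl; auto. apply irr_frac; auto. Qed.

Fixpoint cf_nums (x : R) (k : nat) : Z * Z :=
  match k with
  | O => (cf_partial x 0, 1%Z)
  | S k' => let (a, b) := cf_nums x k' in ((cf_partial x (S k') * a + b)%Z, a)
  end.

Lemma cf_inv x k : irrational x ->
  let Q := fst (cf_denoms x k) in let Q0 := snd (cf_denoms x k) in
  let P := fst (cf_nums x k) in let P0 := snd (cf_nums x k) in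
  let X := cf_complete x (S k) in
  (1 <= Q)%Z /\ (0 <= Q0 <= Q)%Z /\ (Q * P0 - P * Q0 = 1 \/ Q * P0 - P * Q0 = -1)%Z /\
  1 < X /\ x = (IZR P * X + IZR P0) / (IZR Q * X + IZR Q0).
Proof.
  intros Hx. induction k; intros Q Q0 P P0 X.
  - subst Q Q0 P P0 X. cbn [cf_denoms cf_nums fst snd cf_complete]. unfold cf_partial. cbn [cf_complete].
    destruct (irr_frac x Hx) as [[F1 F2] _].
    split. lia. split. lia. split. lia. split.
    + rewrite <- Rinv_1. apply Rinv_lt_contravar; lra.
    + field; lra.
  - destruct IHk as [H1 [H2 [H3 [H4 H5]]]].
    revert H1 H2 H3 H4 H5.
    subst Q Q0 P P0 X. cbn [cf_denoms cf_nums].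
    destruct (cf_denoms x k) as [q1 q0]; destruct (cf_nums x k) as [p1 p0]; cbn [fst snd].
    set (Y := cf_complete x (S k)). unfold cf_partial. fold Y.
    change (cf_complete x (S (S k))) with (/ (Y - IZR (Int_part Y))).
    intros H1 H2 H3 H4 H5.
    destruct (irr_frac Y (cf_irr x (S k) Hx)) as [[F1 F2] _].
    destruct (base_Int_part Y) as [B1 B2].
    set (a := Int_part Y) in *.
    assert (Ha : (1 <= a)%Z). { assert (0 < IZR a) by lra. apply lt_IZR in H. lia. }
    assert (Hq : 1 <= IZR q1) by (apply IZR_le; lia).
    assert (Hq0 : 0 <= IZR q0) by (apply IZR_le; lia).
    split. nia. split. nia. split. lia. split.
    + rewrite <- Rinv_1. apply Rinv_lt_contravar; lra.
    + rewrite H5.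
      rewrite !plus_IZR, !mult_IZR.
      assert (Hy : Y = IZR a + / (/ (Y - IZR a))). { rewrite Rinv_inv. ring. }
      set (Z' := / (Y - IZR a)) in *.
      assert (0 < Z') by (apply Rinv_0_lt_compat; lra).
      rewrite Hy.
      assert (1 <= IZR a) by (apply IZR_le; lia).
      assert (0 < / Z') by (apply Rinv_0_lt_compat; lra).
      assert (1 <= IZR q1) by (apply IZR_le; lia).
      assert (0 <= IZR q0) by (apply IZR_le; lia).
      assert (0 < IZR q1 * (IZR a + / Z') + IZR q0) by nra.
      assert (0 < IZR a * IZR q1 + IZR q0) by nra. assert (0 < (IZR a * IZR q1 + IZR q0) * Z' + IZR q1) by nra.
      field. repeat split; lra.
Qed.

Lemma abs_pm1 e : e = 1 \/ e = -1 -> Rabs e = 1.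
Proof. intros [-> | ->]. apply Rabs_R1. rewrite Rabs_left; lra. Qed.

Lemma CF x q : irrational x -> is_convergent_denominator x q ->
  exists p p0 q0 : Z, (1 <= q)%Z /\ (0 <= q0 <= q)%Z /\
   (q * p0 - p * q0 = 1 \/ q * p0 - p * q0 = -1)%Z /\
   Rabs (IZR q * x - IZR p) <= / IZR q /\ Rabs (IZR q0 * x - IZR p0) <= / IZR q.
Proof.
  intros Hx [k Hk]. pose proof (cf_inv x k Hx) as H. cbv zeta in H.
  unfold convergent_denominator in Hk.
  destruct (cf_denoms x k) as [Q Q0]; destruct (cf_nums x k) as [P P0]. cbn [fst snd] in *.
  subst Q. destruct H as [H1 [H2 [H3 [H4 H5]]]].
  set (X := cf_complete x (S k)) in *.
  exists P, P0, Q0. split; auto. split; auto. split; auto.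
  assert (Hq : 1 <= IZR q) by (apply IZR_le; lia).
  assert (Hq0 : 0 <= IZR Q0) by (apply IZR_le; lia).
  assert (0 < IZR q * X) by (apply Rmult_lt_0_compat; lra). assert (Hd : 0 < IZR q * X + IZR Q0) by lra.
  assert (HD : IZR q * IZR P0 - IZR P * IZR Q0 = 1 \/ IZR q * IZR P0 - IZR P * IZR Q0 = -1).
  { destruct H3 as [E|E]; [left|right]; rewrite <- mult_IZR, <- mult_IZR, <- minus_IZR, E; reflexivity. }
  assert (E1 : IZR q * x - IZR P = (IZR q * IZR P0 - IZR P * IZR Q0) / (IZR q * X + IZR Q0)).
  { rewrite H5. field. lra. }
  assert (E2 : IZR Q0 * x - IZR P0 = - (IZR q * IZR P0 - IZR P * IZR Q0) * X / (IZR q * X + IZR Q0)).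
  { rewrite H5. field. lra. }
  split.
  - rewrite E1. unfold Rdiv. rewrite Rabs_mult, Rabs_inv, (Rabs_pos_eq (_ + _)) by lra.
    replace (Rabs (IZR q * IZR P0 - IZR P * IZR Q0)) with 1
      by (symmetry; apply abs_pm1; exact HD).
    rewrite Rmult_1_l. apply Rinv_le_contravar; nra.
  - rewrite E2. unfold Rdiv. rewrite !Rabs_mult, Rabs_inv, (Rabs_pos_eq (_ + _)) by lra.
    replace (Rabs (- (IZR q * IZR P0 - IZR P * IZR Q0))) with 1
      by (rewrite Rabs_Ropp; symmetry; apply abs_pm1; exact HD).
    rewrite Rabs_pos_eq by lra.
    apply (Rmult_le_reg_r (IZR q * X + IZR Q0)). lra.
    field_simplify; try lra. apply (Rmult_le_reg_r (IZR q)). lra. field_simplify; nra.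
Qed.

Definition mulLinZ (al be : Z) (c : nat -> Z) (i : nat) : Z :=
  (al * c i + be * (match i with O => 0 | S i' => c i' end))%Z.
Definition delta0Z (i : nat) : Z := if Nat.eqb i 0 then 1%Z else 0%Z.
Definition lin_fromZ (fs : list (Z * Z)) (c0 : nat -> Z) : nat -> Z :=
  fold_right (fun f c => mulLinZ (fst f) (snd f) c) c0 fs.
Definition mapR (fs : list (Z * Z)) : list (R * R) := map (fun f => (IZR (fst f), IZR (snd f))) fs.

Lemma lin_fromZ_R fs i : IZR (lin_fromZ fs delta0Z i) = lin_from (mapR fs) delta0 i.
Proof.
  revert i; induction fs as [|f fs IH]; intros i; simpl.
  - unfold delta0Z, delta0. destruct (Nat.eqb i 0); reflexivity.
  - unfold mulLinZ, mulLin. rewrite plus_IZR, !mult_IZR, IH. destruct i; simpl. ring.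
    rewrite IH. reflexivity.
Qed.

Lemma prodf_app l1 l2 u v : prodf (l1 ++ l2) u v = prodf l1 u v * prodf l2 u v.
Proof. induction l1; simpl. ring. rewrite IHl1. ring. Qed.

Lemma prodf_repeat f m u v : prodf (repeat f m) u v = (fst f * v + snd f * u) ^ m.
Proof. induction m; simpl. ring. rewrite IHm. ring. Qed.

Lemma hev0_delta u v : hev 0 delta0 u v = 1.
Proof. unfold hev, delta0. simpl. ring. Qed.

Lemma delta0_supp : forall i, (0 < i)%nat -> delta0 i = 0.
Proof. intros [|i] H. lia. reflexivity. Qed.

Lemma hev_two (al be ga de : R) m k u v :
  hev (m + k) (lin_from (repeat (al, be) m ++ repeat (ga, de) k) delta0) u v =
  (al * v + be * u) ^ m * (ga * v + de * u) ^ k.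
Proof.
  pose proof (hev_lin_from (repeat (al, be) m ++ repeat (ga, de) k) delta0 0 u v delta0_supp) as H.
  rewrite length_app, !repeat_length, Nat.add_0_r in H. rewrite H.
  rewrite hev0_delta, prodf_app, !prodf_repeat. simpl. ring.
Qed.

Lemma mapR_two (a b c d : Z) m k :
  mapR (repeat (a, b) m ++ repeat (c, d) k) = repeat (IZR a, IZR b) m ++ repeat (IZR c, IZR d) k.
Proof. unfold mapR. rewrite map_app, !map_repeat. reflexivity. Qed.

Lemma hev_lincomb d N (c : nat -> R) (w : nat -> nat -> R) u v :
  hev d (fun j => sumR N (fun m => c m * w m j)) u v = sumR N (fun m => c m * hev d (w m) u v).
Proof.
  unfold hev. rewrite (sumR_ext _ _ (fun i => sumR N (fun m => c m * w m i * u ^ i * v ^ (d - i)))).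
  2:{ intros. rewrite <- !sumR_scal_r. reflexivity. }
  rewrite sumR_swap. apply sumR_ext. intros. rewrite <- sumR_scal. apply sumR_ext; intros; ring.
Qed.

Lemma lin_from_bound0 fs rho w :
  0 <= rho -> 0 <= w ->
  Forall (fun f => Rabs (fst f) <= rho /\ Rabs (snd f) <= rho * w) fs ->
  forall i, Rabs (lin_from fs delta0 i) <= rho ^ (length fs) * bin (length fs) i * w ^ i.
Proof.
  intros. pose proof (lin_from_bound fs delta0 0 rho w 1 H H0 H1) as B.
  rewrite Nat.add_0_r in B. rewrite <- (Rmult_1_l (rho ^ _)). apply B.
  intros [|j]; unfold delta0; simpl. rewrite Rabs_R1; lra. rewrite Rabs_R0; lra.
Qed.

Lemma Forall_two (P : R * R -> Prop) f g m k : P f -> P g -> Forall P (repeat f m ++ repeat g k).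
Proof. intros. apply Forall_app; split; apply Forall_forall; intros x Hx;
  apply repeat_spec in Hx; subst; auto. Qed.

Lemma hev_two' (al be ga de : R) k n u v : (k <= n)%nat ->
  hev n (lin_from (repeat (al, be) k ++ repeat (ga, de) (n - k)) delta0) u v =
  (al * v + be * u) ^ k * (ga * v + de * u) ^ (n - k).
Proof.
  intros H. rewrite <- hev_two. f_equal. lia.
Qed.

Lemma Forall_rep (P : R * R -> Prop) f m : P f -> Forall P (repeat f m).
Proof. intros. apply Forall_forall; intros x Hx; apply repeat_spec in Hx; subst; auto. Qed.

Lemma abs_pm1' e : e = 1 \/ e = -1 -> Rabs e = 1.
Proof. intros [-> | ->]. apply Rabs_R1. rewrite Rabs_left; lra. Qed.

Lemma pRZ (x : R) a b : x <> 0 -> powerRZ x (Z.of_nat a - Z.of_nat b) = x ^ a * / x ^ b.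
Proof.
  intros Hx. unfold Z.sub. rewrite powerRZ_add by auto. rewrite powerRZ_neg'.
  rewrite <- !pow_powerRZ. reflexivity.
Qed.

Lemma pRZ2 (x : R) k n : x <> 0 -> powerRZ x (2 * Z.of_nat k - Z.of_nat n) = (x ^ 2) ^ k * / x ^ n.
Proof.
  intros Hx. replace (2 * Z.of_nat k)%Z with (Z.of_nat (2 * k)) by lia.
  rewrite pRZ by auto. rewrite pow_mult. reflexivity.
Qed.

Section Main.
Variables (xi : R) (n : nat) (p q p0 q0 : Z).
Hypothesis Hq : (1 <= q)%Z.
Hypothesis Hq0 : (0 <= q0 <= q)%Z.
Hypothesis He : (q * p0 - p * q0 = 1 \/ q * p0 - p * q0 = -1)%Z.
Hypothesis Ha : Rabs (IZR q * xi - IZR p) <= / IZR q.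
Hypothesis Hb : Rabs (IZR q0 * xi - IZR p0) <= / IZR q.

Definition eps : Z := (q * p0 - p * q0)%Z.
Definition ER : R := IZR q * IZR p0 - IZR p * IZR q0.
Lemma ER_eps : IZR eps = ER.
Proof. unfold eps, ER. rewrite minus_IZR, !mult_IZR. reflexivity. Qed.
Lemma ER2 : ER * ER = 1.
Proof. rewrite <- ER_eps. unfold eps. destruct He as [E|E]; rewrite E; simpl; lra. Qed.

Lemma S1 u v : IZR q * (ER * (IZR p0 * u - IZR p * v)) - IZR p * (ER * (IZR q0 * u - IZR q * v)) = u /\
               IZR q0 * (ER * (IZR p0 * u - IZR p * v)) - IZR p0 * (ER * (IZR q0 * u - IZR q * v)) = v.
Proof.
  split.
  - transitivity (ER * ER * u). unfold ER; ring. rewrite ER2; ring.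
  - transitivity (ER * ER * v). unfold ER; ring. rewrite ER2; ring.
Qed.

Lemma S2 x y : ER * (IZR p0 * (IZR q * x - IZR p * y) - IZR p * (IZR q0 * x - IZR p0 * y)) = x /\
               ER * (IZR q0 * (IZR q * x - IZR p * y) - IZR q * (IZR q0 * x - IZR p0 * y)) = y.
Proof.
  split.
  - transitivity (ER * ER * x). unfold ER; ring. rewrite ER2; ring.
  - transitivity (ER * ER * y). unfold ER; ring. rewrite ER2; ring.
Qed.

Definition Qm (m : nat) : nat -> Z :=
  lin_fromZ (repeat ((- p)%Z, q) m ++ repeat ((- p0)%Z, q0) (n - m)) delta0Z.

Lemma hevZ fs d u v : hev d (fun j => IZR (lin_fromZ fs delta0Z j)) u v = hev d (lin_from (mapR fs) delta0) u v.
Proof. unfold hev. apply sumR_ext. intros. rewrite lin_fromZ_R. reflexivity. Qed.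

Lemma Qm_hev m x y : (m <= n)%nat ->
  hev n (fun j => IZR (Qm m j)) x y = (IZR q * x - IZR p * y) ^ m * (IZR q0 * x - IZR p0 * y) ^ (n - m).
Proof.
  intros Hm. unfold Qm. rewrite hevZ, mapR_two.
  replace n with (m + (n - m))%nat at 1 by lia. rewrite hev_two.
  rewrite !opp_IZR. f_equal; f_equal; ring.
Qed.

Lemma F2 : lin_indep n (S n) Qm.
Proof.
  intros c Hc m Hm.
  assert (H : forall u, hev n c u 1 = hev n (fun _ => 0) u 1).
  { intros u. transitivity (hev n (fun j => sumR (S n) (fun m => c m * IZR (Qm m j)))
       (ER * (IZR p0 * u - IZR p * 1)) (ER * (IZR q0 * u - IZR q * 1))).
    - rewrite hev_lincomb. unfold hev at 1. apply sumR_ext. intros i Hi.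
      rewrite Qm_hev by lia. destruct (S1 u 1) as [-> ->]. ring.
    - unfold hev. rewrite !sumR_zero; auto. intros; ring. intros i Hi. rewrite Hc by lia. ring. }
  apply (UC n c (fun _ => 0) H m). lia.
Qed.

Definition Gj (j : nat) : nat -> Z :=
  lin_fromZ (repeat ((- (eps * p))%Z, (eps * p0)%Z) j ++ repeat ((- (eps * q))%Z, (eps * q0)%Z) (n - j)) delta0Z.

Lemma Gj_hev j u v : (j <= n)%nat ->
  hev n (fun i => IZR (Gj j i)) u v = (ER * (IZR p0 * u - IZR p * v)) ^ j * (ER * (IZR q0 * u - IZR q * v)) ^ (n - j).
Proof.
  intros Hj. unfold Gj. rewrite hevZ, mapR_two.
  replace n with (j + (n - j))%nat at 1 by lia. rewrite hev_two.
  rewrite !opp_IZR, !mult_IZR, ER_eps. f_equal; f_equal; ring.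
Qed.

Definition cZ (a : nat -> Z) (m : nat) : Z := sumZ (S n) (fun j => (a j * Gj j m)%Z).

Lemma hev_ext d c c' u v : (forall i, (i <= d)%nat -> c i = c' i) -> hev d c u v = hev d c' u v.
Proof. intros H. unfold hev. apply sumR_ext. intros i Hi. rewrite H by lia. reflexivity. Qed.

Lemma hev_Qcomb (c : nat -> R) x y :
  hev n (fun j => sumR (S n) (fun m => c m * IZR (Qm m j))) x y =
  hev n c (IZR q * x - IZR p * y) (IZR q0 * x - IZR p0 * y).
Proof.
  rewrite hev_lincomb. unfold hev at 2. apply sumR_ext. intros m Hm.
  rewrite Qm_hev by lia. ring.
Qed.

Lemma F1 (a : nat -> Z) : forall j, (j <= n)%nat -> a j = sumZ (S n) (fun m => (cZ a m * Qm m j)%Z).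
Proof.
  intros j Hj. apply eq_IZR. rewrite IZR_sumZ.
  set (B := fun j => sumR (S n) (fun m => IZR (cZ a m * Qm m j))).
  change (sumR (S n) (fun m => IZR (cZ a m * Qm m j))) with (B j).
  symmetry. apply (UC n B (fun j => IZR (a j))); auto.
  intros x. set (y := 1).
  rewrite (hev_ext n B (fun j => sumR (S n) (fun m => IZR (cZ a m) * IZR (Qm m j)))).
  2:{ intros i _. unfold B. apply sumR_ext. intros; apply mult_IZR. }
  rewrite hev_Qcomb.
  rewrite (hev_ext n (fun m => IZR (cZ a m)) (fun m => sumR (S n) (fun j => IZR (a j) * IZR (Gj j m)))).
  2:{ intros i _. unfold cZ. rewrite IZR_sumZ. apply sumR_ext. intros; apply mult_IZR. }
  rewrite hev_lincomb. unfold hev at 2. apply sumR_ext. intros i Hi.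
  rewrite Gj_hev by lia. destruct (S2 x y) as [-> ->]. ring.
Qed.

Definition aR : R := IZR q * xi - IZR p.
Definition bR : R := IZR q0 * xi - IZR p0.

Lemma qpos : 1 <= IZR q.
Proof. apply IZR_le; lia. Qed.
Lemma q0pos : 0 <= IZR q0 <= IZR q.
Proof. split; apply IZR_le; lia. Qed.

Lemma TT_Q m k : (m <= n)%nat -> (k <= n)%nat ->
  TT xi n (fun j => IZR (Qm m j)) k =
  lin_from (repeat (aR, IZR q) m ++ repeat (bR, IZR q0) (n - m)) delta0 k.
Proof.
  intros Hm Hk. apply (UC n (TT xi n (fun j => IZR (Qm m j)))); auto.
  intros X.
  transitivity (hev n (fun j => IZR (Qm m j)) (X + xi * 1) 1).
  - rewrite (HT xi n (fun j => IZR (Qm m j))). unfold hev. apply sumR_ext. intros.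
    replace (X + xi * 1 - xi * 1) with X by ring. reflexivity.
  - rewrite Qm_hev by auto.
    replace n with (m + (n - m))%nat at 2 by lia. rewrite hev_two.
    unfold aR, bR. f_equal; f_equal; ring.
Qed.

Lemma F3 m k : (m <= n)%nat -> (k <= n)%nat ->
  Rabs (divderiv xi n (Qm m) k) <= 2 ^ n * powerRZ (IZR q) (2 * Z.of_nat k - Z.of_nat n).
Proof.
  intros Hm Hk. pose proof qpos as Q1. pose proof q0pos as Q2.
  change (divderiv xi n (Qm m) k) with (TT xi n (fun j => IZR (Qm m j)) k).
  rewrite TT_Q by auto.
  eapply Rle_trans. apply lin_from_bound0 with (rho := / IZR q) (w := IZR q ^ 2).
  - left; apply Rinv_0_lt_compat; lra.
  - apply pow_le; lra.
  - apply Forall_two; simpl; split.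
    + exact Ha.
    + rewrite Rabs_pos_eq by lra. right. field. lra.
    + exact Hb.
    + rewrite Rabs_pos_eq by lra. assert (/ IZR q * (IZR q * (IZR q * 1)) = IZR q) by (field; lra). lra.
  - rewrite length_app, !repeat_length. replace (m + (n - m))%nat with n by lia.
    rewrite pRZ2 by lra. rewrite pow_inv.
    pose proof (bin_le n k). pose proof (pow_le (IZR q ^ 2) k ltac:(apply pow_le; lra)).
    assert (0 < / IZR q ^ n) by (apply Rinv_0_lt_compat, pow_lt; lra).
    assert (0 <= (IZR q ^ 2) ^ k * / IZR q ^ n) by (apply Rmult_le_pos; lra).
    replace (/ IZR q ^ n * bin n k * (IZR q ^ 2) ^ k) with (bin n k * ((IZR q ^ 2) ^ k * / IZR q ^ n)) by ring.
    apply Rmult_le_compat_r; lra.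
Qed.

Lemma RabsER : Rabs ER = 1.
Proof. rewrite <- ER_eps. unfold eps. apply abs_pm1'. destruct He as [E|E]; rewrite E; [left|right]; reflexivity. Qed.

Definition Wk (k : nat) : nat -> R :=
  lin_from (repeat (ER * aR, - (ER * bR)) k ++ repeat (- (ER * IZR q), ER * IZR q0) (n - k)) delta0.

Lemma Wk_bound k i : (k <= n)%nat -> Rabs (Wk k i) <= IZR q ^ (n - k) * (/ IZR q) ^ k * 2 ^ n.
Proof.
  intros Hk. pose proof qpos as Q1. pose proof q0pos as Q2. pose proof RabsER as RE.
  unfold Wk, lin_from. rewrite fold_right_app. fold (lin_from (repeat (ER * aR, - (ER * bR)) k)).
  fold (lin_from (repeat (- (ER * IZR q), ER * IZR q0) (n - k)) delta0).
  assert (HI := lin_from_bound0 (repeat (- (ER * IZR q), ER * IZR q0) (n - k)) (IZR q) 1).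
  rewrite repeat_length in HI.
  assert (HF : Forall (fun f => Rabs (fst f) <= IZR q /\ Rabs (snd f) <= IZR q * 1)
                (repeat (- (ER * IZR q), ER * IZR q0) (n - k))).
  { apply Forall_rep; simpl; split;
     rewrite ?Rabs_Ropp, Rabs_mult, RE, Rabs_pos_eq; lra. }
  specialize (HI ltac:(lra) ltac:(lra) HF).
  pose proof (lin_from_bound (repeat (ER * aR, - (ER * bR)) k)
     (lin_from (repeat (- (ER * IZR q), ER * IZR q0) (n - k)) delta0) (n - k) (/ IZR q) 1
     (IZR q ^ (n - k))) as HO.
  rewrite repeat_length in HO.
  assert (HF2 : Forall (fun f => Rabs (fst f) <= / IZR q /\ Rabs (snd f) <= / IZR q * 1)
                (repeat (ER * aR, - (ER * bR)) k)).
  { apply Forall_rep; simpl; split;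
     rewrite ?Rabs_Ropp, Rabs_mult, RE; unfold aR, bR; lra. }
  assert (0 < / IZR q) by (apply Rinv_0_lt_compat; lra).
  specialize (HO ltac:(lra) ltac:(lra) HF2 HI i).
  eapply Rle_trans. exact HO.
  rewrite pow1, Rmult_1_r. replace (k + (n - k))%nat with n by lia.
  pose proof (bin_le n i).
  assert (0 <= IZR q ^ (n - k) * (/ IZR q) ^ k) by (apply Rmult_le_pos; apply pow_le; lra).
  apply Rmult_le_compat_l; lra.
Qed.

Lemma F4 lam (a : nat -> Z) : in_scaled_body xi n q lam a ->
  (exists j, (j <= n)%nat /\ a j <> 0%Z) -> 1 <= lam * (INR (S n) * 2 ^ n).
Proof.
  intros Hin [j0 [Hj0 Ha0]].
  pose proof qpos as Q1.
  set (A := fun j => IZR (a j)).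
  set (t := fun k => TT xi n A k).
  assert (Ht : forall k, (k <= n)%nat -> Rabs (t k) <= lam * ((IZR q ^ 2) ^ k * / IZR q ^ n)).
  { intros k Hk. rewrite <- pRZ2 by lra. apply Hin. auto. }
  assert (Hc : forall i, (i <= n)%nat -> IZR (cZ a i) = sumR (S n) (fun k => t k * Wk k i)).
  { apply (UC n (fun i => IZR (cZ a i)) (fun i => sumR (S n) (fun k => t k * Wk k i))).
    intros u. set (v := 1).
    set (x := ER * (IZR p0 * u - IZR p * v)). set (y := ER * (IZR q0 * u - IZR q * v)).
    destruct (S1 u v) as [E1 E2]. fold x y in E1, E2.
    transitivity (hev n (fun j => sumR (S n) (fun m => IZR (cZ a m) * IZR (Qm m j))) x y).
    { rewrite hev_Qcomb, E1, E2. reflexivity. }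
    transitivity (hev n A x y).
    { apply hev_ext. intros i Hi. unfold A. rewrite (F1 a i Hi), IZR_sumZ.
      apply sumR_ext. intros; symmetry; apply mult_IZR. }
    rewrite (HT xi n A x y).
    rewrite hev_lincomb. apply sumR_ext. intros k Hk. fold (t k).
    unfold Wk. rewrite hev_two' by lia.
    rewrite Rmult_assoc. f_equal. f_equal; f_equal; unfold x, y, aR, bR; ring. }
  assert (Hnz : exists m, (m <= n)%nat /\ cZ a m <> 0%Z).
  { apply NNPP. intros Hn. apply Ha0. rewrite (F1 a j0 Hj0). apply eq_IZR.
    rewrite IZR_sumZ. apply sumR_zero. intros m Hm.
    assert (cZ a m = 0%Z). { apply NNPP; intros Hc0. apply Hn. exists m; split; auto; lia. }
    rewrite H. reflexivity. }
  destruct Hnz as [m [Hm Hcm]].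
  assert (H1 : 1 <= Rabs (IZR (cZ a m))).
  { rewrite Rabs_Zabs. apply IZR_le. lia. }
  rewrite Hc in H1 by auto.
  eapply Rle_trans. exact H1.
  eapply Rle_trans. apply sumR_abs.
  replace (lam * (INR (S n) * 2 ^ n)) with (sumR (S n) (fun _ => lam * 2 ^ n))
    by (rewrite sumR_const; ring).
  apply sumR_le. intros k Hk.
  rewrite Rabs_mult.
  assert (HW := Wk_bound k m ltac:(lia)).
  assert (HT := Ht k ltac:(lia)).
  eapply Rle_trans. apply Rmult_le_compat; try apply Rabs_pos; eauto.
  assert (EE : (IZR q ^ 2) ^ k * / IZR q ^ n * (IZR q ^ (n - k) * (/ IZR q) ^ k) = 1).
  { rewrite pow_inv. replace (IZR q ^ n) with (IZR q ^ (n - k) * IZR q ^ k)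
       by (rewrite <- pow_add; f_equal; lia).
    replace ((IZR q ^ 2) ^ k) with (IZR q ^ k * IZR q ^ k)
       by (rewrite <- Rpow_mult_distr; f_equal; ring).
    assert (IZR q ^ k <> 0) by (apply pow_nonzero; lra).
    assert (IZR q ^ (n - k) <> 0) by (apply pow_nonzero; lra).
    field. auto. }
  right. transitivity (lam * 2 ^ n * ((IZR q ^ 2) ^ k * / IZR q ^ n * (IZR q ^ (n - k) * (/ IZR q) ^ k))).
  ring. rewrite EE. ring.
Qed.

End Main.

Lemma final_ineq n lam : 0 < lam -> 1 <= lam * (INR (S n) * 2 ^ n) ->
  / (2 ^ (n * n) * INR (fact (n + 1))) <= lam.
Proof.
  intros Hl H.
  assert (A1 : INR (S n) <= INR (fact (n + 1))).
  { apply le_INR. replace (n + 1)%nat with (S n) by lia. simpl.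
    pose proof (lt_O_fact n). nia. }
  assert (A2 : 2 ^ n <= 2 ^ (n * n)).
  { apply Rle_pow. lra. nia. }
  assert (P1 : 0 < INR (S n)) by (apply lt_0_INR; lia).
  assert (P2 : 0 < 2 ^ n) by (apply pow_lt; lra).
  assert (Y : INR (S n) * 2 ^ n <= 2 ^ (n * n) * INR (fact (n + 1))).
  { rewrite Rmult_comm. apply Rmult_le_compat; lra. }
  assert (0 < INR (S n) * 2 ^ n) by (apply Rmult_lt_0_compat; lra).
  apply Rle_trans with (/ (INR (S n) * 2 ^ n)).
  - apply Rinv_le_contravar; lra.
  - apply (Rmult_le_reg_r (INR (S n) * 2 ^ n)). lra.
    rewrite Rinv_l by lra. lra.
Qed.

Theorem proposition1 (xi : R) (n : nat) (q : Z) :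
  irrational xi -> (1 <= n)%nat -> is_convergent_denominator xi q ->
  (forall lam, successive_minimum xi n q (S n) lam -> lam <= 2 ^ n) /\
  (forall lam, successive_minimum xi n q 1 lam ->
     / (2 ^ (n * n) * INR (fact (n + 1))) <= lam) /\
  (exists fam : nat -> nat -> Z,
     Z_basis n fam /\ forall m, (m <= n)%nat -> in_scaled_body xi n q (2 ^ n) (fam m)).
Proof.
  intros Hirr Hn Hconv.
  destruct (CF xi q Hirr Hconv) as [p [p0 [q0 [H1 [H2 [H3 [H4 H5]]]]]]].
  assert (Body : forall m, (m <= n)%nat -> in_scaled_body xi n q (2 ^ n) (Qm n p q p0 q0 m)).
  { intros m Hm k Hk. apply (F3 xi n p q p0 q0 H1 H2 H4 H5); auto. }
  split; [|split].
  - intros lam [Hinf _]. apply Hinf. split. apply pow_lt; lra.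
    exists (Qm n p q p0 q0). split. apply F2; auto.
    intros m Hm. apply Body. lia.
  - intros lam [_ Hinf]. apply Hinf. intros x [Hx [fam [Hli Hb]]].
    apply final_ineq; auto.
    apply (F4 xi n p q p0 q0 H1 H2 H3 H4 H5 x (fam 0%nat)). apply Hb; lia.
    apply NNPP. intros Hno.
    assert (1 = 0).
    { assert (HH : forall j, (j <= n)%nat ->
         sumR 1 (fun m => (fun _ : nat => 1) m * IZR (fam m j)) = 0).
      { intros j Hj. simpl. assert (fam 0%nat j = 0%Z).
        { apply NNPP. intros Hne. apply Hno. exists j. auto. }
        rewrite H. ring. }
      exact (Hli (fun _ => 1) HH 0%nat ltac:(lia)). }
    lra.
  - exists (Qm n p q p0 q0). split; [split|].
    + apply F2; auto.
    + intros a. exists (cZ n p q p0 q0 a). intros j Hj. apply F1; auto.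
    + exact Body.
Qed.
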